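(* Let $\mathcal{F}=\{f_i\}_{i=1}^k$ be a frame for $\mathcal{H}_n$ with $\operatorname{rob}(\mathcal{F})=r$, and let $P$ be the orthogonal projection onto a subspace $U$ of $\mathcal{H}_n$. Then the frame $P\mathcal{F}=\{Pf_i\}_{i=1}^k$ for $U$ has maximum robustness $r$ if and only if there exists a subset $\mathcal{F}'$ of $\mathcal{F}$ consisting of $k-r-1$ vectors which does not span $\mathcal{H}_n$ and satisfies $\operatorname{span}(\mathcal{F}')^\perp\subseteq U$.
   Context: $\mathcal{H}_n$ is an $n$-dimensional real or complex Hilbert space. A finite sequence of vectors in a finite-dimensional Hilbert space $V$ is a frame for $V$ iff it spans $V$. A frame $\{f_i\}_{i=1}^k$ for $V$ is robust to $r$ erasures if for every index set $I\subseteq\{1,\dots,k\}$ with $|I|=r$, the sequence $\{f_i\}_{i\notin I}$ still spans $V$. The maximum robustness $\operatorname{rob}(\mathcal{F})$ is the largest $r$ such that $\mathcal{F}$ is robust to $r$ erasures. *)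

(* Defs.v *)
From HB Require Import structures.
From mathcomp Require Import all_boot all_order all_algebra.
Set Implicit Arguments. Unset Strict Implicit. Unset Printing Implicit Defensive.
Import Order.TTheory GRing.Theory Num.Theory.
Local Open Scope ring_scope.

(* Vectors of H_n are row vectors 'rV[F]_n; a finite sequence {f_i}_{i<k}
   is the k x n matrix whose i-th row is f_i.  Subspaces are represented
   (as in mxalgebra) by matrices through their row space.  The inner product
   is <u,v> = \sum_j u_j * cj (v_j), with cj = id (real case) or
   cj = complex conjugation (complex case). *)

Definition span_in (F : fieldType) (k n : nat) (Fr : 'M[F]_(k, n))
  (J : {set 'I_k}) : 'M[F]_n :=
  (\sum_(i in J) <<row i Fr>>)%MS.

Definition span_excl (F : fieldType) (k n : nat) (Fr : 'M[F]_(k, n))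
  (I : {set 'I_k}) : 'M[F]_n :=
  (\sum_(i | i \notin I) <<row i Fr>>)%MS.

Definition is_frame (F : fieldType) (k n : nat) (Fr : 'M[F]_(k, n))
  (V : 'M[F]_n) : Prop :=
  (span_excl Fr set0 == V)%MS.

(* robust to r erasures (only r <= k erasures are meaningful) *)
Definition robust (F : fieldType) (k n : nat) (Fr : 'M[F]_(k, n))
  (V : 'M[F]_n) (r : nat) : Prop :=
  (r <= k)%N /\
  forall I : {set 'I_k}, #|I| = r -> (span_excl Fr I == V)%MS.

Definition max_rob (F : fieldType) (k n : nat) (Fr : 'M[F]_(k, n))
  (V : 'M[F]_n) (r : nat) : Prop :=
  robust Fr V r /\ forall s, robust Fr V s -> (s <= r)%N.

(* orthogonal complement of the row space of A w.r.t. <u,v> = u *m (cj v)^T *)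
Definition orth_compl (F : fieldType) (cj : F -> F) (m n : nat)
  (A : 'M[F]_(m, n)) : 'M[F]_n :=
  kermx (map_mx cj A)^T.

(* P (acting on row vectors on the right: v |-> v *m P) is the orthogonal
   projection onto U *)
Definition orth_proj (F : fieldType) (cj : F -> F) (n : nat)
  (P U : 'M[F]_n) : Prop :=
  forall v : 'rV[F]_n,
    (v *m P <= U)%MS /\ (v - v *m P <= orth_compl cj U)%MS.

(* Main.v *)
Require Import Defs.
From HB Require Import structures.
From mathcomp Require Import all_boot all_order all_algebra.
Set Implicit Arguments. Unset Strict Implicit. Unset Printing Implicit Defensive.
Import Order.TTheory GRing.Theory Num.Theory.
Local Open Scope ring_scope.

Lemma set_extend (T : finType) d (A : {set T}) :
  (#|A| + d <= #|T|)%N -> exists B : {set T}, A \subset B /\ #|B| = (#|A| + d)%N.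
Proof.
elim: d A => [|d IH] A h; first by exists A; rewrite addn0.
have: (0 < #|~: A|)%N.
  by move: h; rewrite -(cardsC A) addnS ltn_add2l => /(leq_ltn_trans (leq0n d)).
case/card_gt0P => x; rewrite in_setC => xA.
have := IH (x |: A); rewrite cardsU1 xA add1n addSnnS => /(_ h) [B [sB cB]].
exists B; split => //; apply: subset_trans sB; exact: subsetUr.
Qed.

Section Gen.
Variable F : fieldType.
Variable cj : {rmorphism F -> F}.
Hypothesis cjK : involutive cj.
Hypothesis pos : forall n (x : 'rV[F]_n), x *m (map_mx cj x)^T = 0 -> x = 0.

Lemma map_cjK m n (A : 'M[F]_(m, n)) : map_mx cj (map_mx cj A) = A.
Proof. by apply/matrixP => i j; rewrite !mxE cjK. Qed.

Lemma orth_sym m p n (A : 'M[F]_(m,n)) (B : 'M[F]_(p,n)) :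
  A *m (map_mx cj B)^T = 0 -> B *m (map_mx cj A)^T = 0.
Proof.
move=> h; have : (map_mx cj (A *m (map_mx cj B)^T))^T = 0.
  by rewrite h map_mx0 trmx0.
by rewrite map_mxM trmx_mul map_trmx map_cjK trmxK.
Qed.

Lemma orth_sub m n p (A : 'M[F]_(m,n)) (U : 'M[F]_(p,n)) :
  (A <= orth_compl cj U)%MS = (A *m (map_mx cj U)^T == 0).
Proof. by rewrite /orth_compl sub_kermx. Qed.

Lemma cap_orth n (x : 'rV[F]_n) (U : 'M[F]_n) :
  (x <= U)%MS -> (x <= orth_compl cj U)%MS -> x = 0.
Proof.
case/submxP => D ->; rewrite orth_sub => /eqP h; apply: pos.
by rewrite map_mxM trmx_mul mulmxA h mul0mx.
Qed.

Lemma orth_anti n m p (A : 'M[F]_(m,n)) (B : 'M[F]_(p,n)) :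
  (A <= B)%MS -> (orth_compl cj B <= orth_compl cj A)%MS.
Proof.
case/submxP => D ->; rewrite orth_sub.
by apply/eqP; rewrite map_mxM trmx_mul mulmxA /orth_compl mulmx_ker mul0mx.
Qed.

Lemma orth_rank n (A : 'M[F]_n) : \rank (orth_compl cj A) = (n - \rank A)%N.
Proof. by rewrite /orth_compl mxrank_ker mxrank_tr mxrank_map. Qed.

Lemma orthK n (A : 'M[F]_n) : (orth_compl cj (orth_compl cj A) <= A)%MS.
Proof.
have sA : (A <= orth_compl cj (orth_compl cj A))%MS.
  by rewrite orth_sub; apply/eqP/orth_sym/eqP; rewrite -orth_sub.
rewrite -(mxrank_leqif_sup sA) !orth_rank subKn ?rank_leq_col //.
Qed.

Lemma subB_sub m n (A B : 'M[F]_(m,n)) p (C : 'M[F]_(p,n)) :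
  (A <= C)%MS -> (B <= C)%MS -> (A - B <= C)%MS.
Proof. by move=> hA hB; apply: addmx_sub => //; rewrite (eqmx_opp B). Qed.

Section Proj.
Variables (n : nat) (U P : 'M[F]_n).
Hypothesis hP : orth_proj cj P U.
Local Notation T := (orth_compl cj U).

Lemma projU (v : 'rV_n) : (v *m P <= U)%MS. Proof. by case: (hP v). Qed.
Lemma projT (v : 'rV_n) : (v - v *m P <= T)%MS. Proof. by case: (hP v). Qed.

Lemma proj_id (u : 'rV_n) : (u <= U)%MS -> u *m P = u.
Proof.
move=> hu; apply/eqP; rewrite eq_sym -subr_eq0; apply/eqP; apply: (cap_orth (U:=U)).
  by apply: subB_sub => //; apply: projU.
exact: projT.
Qed.

Lemma projT0 (t : 'rV_n) : (t <= T)%MS -> t *m P = 0.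
Proof.
move=> ht; apply: (cap_orth (U:=U)); first exact: projU.
have -> : t *m P = t - (t - t *m P) by rewrite opprB addrC subrK.
by apply: subB_sub => //; apply: projT.
Qed.

Lemma PU : (P == U)%MS.
Proof.
apply/andP; split.
  by apply/row_subP => i; rewrite -[P]mul1mx row_mul; apply: projU.
apply/row_subP => i; rewrite -(proj_id (row_sub i U)); exact: submxMl.
Qed.

Lemma L1 (W : 'M[F]_n) : (U <= W *m P)%MS -> (T <= W)%MS -> (1%:M <= W)%MS.
Proof.
move=> sU sT; apply/row_subP => i; set v := row i _.
have /submxP [D hD] := submx_trans (projU v) sU.
set h := D *m W.
have hh : (h <= W)%MS by apply: submxMl.
have -> : v = h + ((v - v *m P) - (h - h *m P)).
  by rewrite /h -mulmxA -hD (opprB (D *m W)) (addrA (v - v *m P)) (subrK (v *m P)) (addrC (D *m W)) (subrK (D *m W)).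
apply: addmx_sub => //; apply: subB_sub; apply: submx_trans sT; exact: projT.
Qed.

Lemma L2 (H : 'M[F]_n) : (1%:M <= H + T)%MS -> (H *m P == U)%MS.
Proof.
move=> s1; apply/andP; split.
  by apply/row_subP => i; rewrite row_mul; apply: projU.
apply/row_subP => i.
have /sub_addsmxP [[a b] /= hu] := submx_trans (submx1 (row i U)) s1.
rewrite -(proj_id (row_sub i U)) hu mulmxDl (projT0 (submxMl _ _)) addr0.
by rewrite -mulmxA submxMl.
Qed.

Lemma L3 (H : 'M[F]_n) : (T <= H)%MS -> (orth_compl cj H <= U)%MS.
Proof.
move=> sT; apply/row_subP => i; set x := row i _.
have hx : (x <= orth_compl cj H)%MS by apply: row_sub.
rewrite orth_sub in hx; move/eqP: hx => hx.
set y := x - x *m P.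
have yT : (y <= T)%MS by apply: projT.
have : y = 0.
  apply: pos; rewrite mulmxBl.
  have /submxP [D hD] := submx_trans yT sT.
  have -> : x *m (map_mx cj y)^T = 0.
    by rewrite hD map_mxM trmx_mul mulmxA hx mul0mx.
  have /submxP [E hE] := projU x.
  rewrite orth_sub in yT; move/eqP/orth_sym: yT => yT.
  by rewrite hE -mulmxA yT mulmx0 subr0.
move/eqP; rewrite subr_eq0 => /eqP ->; exact: projU.
Qed.

End Proj.

Section Span.
Variables (k n : nat) (Fr : 'M[F]_(k, n)).

Lemma S1 (P : 'M[F]_n) I :
  (span_excl (Fr *m P) I == span_excl Fr I *m P)%MS.
Proof.
apply/andP; split.
  apply/sumsmx_subP => i hi; rewrite genmxE row_mul submxMr //.
  by rewrite (sumsmx_sup i) // genmxE.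
rewrite /span_excl (sumsmxMr _ (fun i => <<row i Fr>>%MS)).
apply/sumsmx_subP => i hi; rewrite (eqmxMr P (genmxE _)) -row_mul.
by rewrite (sumsmx_sup i) // genmxE.
Qed.

Lemma S2 (I I' : {set 'I_k}) : I \subset I' ->
  (span_excl Fr I' <= span_excl Fr I)%MS.
Proof.
move=> sI; apply/sumsmx_subP => i hi; apply: (sumsmx_sup i) => //.
by apply: contra hi; apply: (subsetP sI).
Qed.

Lemma S3 (I : {set 'I_k}) i : i \in I ->
  (span_excl Fr (I :\ i) <= span_excl Fr I + <<row i Fr>>)%MS.
Proof.
move=> iI; apply/sumsmx_subP => j hj.
case: (eqVneq j i) => [->|ne]; first exact: addsmxSr.
apply: submx_trans (addsmxSl _ _); apply: (sumsmx_sup j) => //.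
by move: hj; rewrite in_setD1 ne.
Qed.

Lemma S4 : span_excl Fr setT = 0.
Proof. by rewrite /span_excl big_pred0 // => i; rewrite in_setT. Qed.

Lemma S5 (J : {set 'I_k}) : span_in Fr J = span_excl Fr (~: J).
Proof. by rewrite /span_in /span_excl; apply: eq_bigl => i; rewrite in_setC negbK. Qed.

End Span.

Theorem main n k (Fr : 'M[F]_(k, n)) (U P : 'M[F]_n) (r : nat) :
  (0 < n)%N -> max_rob Fr 1%:M r -> orth_proj cj P U ->
  (max_rob (Fr *m P) U r <->
   exists J : {set 'I_k},
     (#|J| + r + 1)%N = k /\
     ~~ (span_in Fr J == 1%:M)%MS /\
     (orth_compl cj (span_in Fr J) <= U)%MS).
Proof.
move=> n0 [[rk rob] _] hP.
have rltk : (r < k)%N.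
  rewrite ltn_neqAle rk andbT; apply/eqP => rk'.
  have := rob setT; rewrite cardsT card_ord rk' S4 => /(_ erefl) e; move: (eqmx_rank e).
  by rewrite mxrank0 mxrank1 => n00; rewrite -n00 in n0.
have not1 : forall H : 'M[F]_n, ~~ (1%:M <= H)%MS -> ~~ (H == 1%:M)%MS.
  by move=> H h; apply: contra h => /andP[].
split.
- case=> [[_ robP] maxP].
  have nR : ~ robust (Fr *m P) U r.+1 by move/maxP; rewrite ltnn.
  case: (boolP [exists I : {set 'I_k}, (#|I| == r.+1) &&
                  ~~ (span_excl (Fr *m P) I == U)%MS]); last first.
    move/existsPn => h; case: nR; split => // I cI.
    by have := h I; rewrite cI eqxx /= negbK.
  case/existsP => I /andP [/eqP cI nI].
  set H := span_excl Fr I.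
  have nHT : ~~ (1%:M <= H + orth_compl cj U)%MS.
    apply: contra nI => /(L2 hP) hH.
    by apply/eqmxP; apply: eqmx_trans (eqmxP (S1 _ _ _)) (eqmxP hH).
  have rH : (n <= (\rank H).+1)%N.
    have : (0 < #|I|)%N by rewrite cI.
    case/card_gt0P => i iI.
    have hI : #|I :\ i| = r by move: cI; rewrite (cardsD1 i) iI add1n => -[].
    have e0 := rob _ hI; have := eqmx_rank e0; rewrite mxrank1 => e.
    rewrite -{1}e; apply: leq_trans (mxrankS (S3 _ iI)) _.
    apply: leq_trans (mxrank_adds_leqif _ _) _.
    by rewrite -[(\rank H).+1]addn1 leq_add2l mxrank_gen rank_leq_row.
  have sT : (orth_compl cj U <= H)%MS.
    apply: contraNT nHT => nT; rewrite sub1mx /row_full eqn_leq rank_leq_col /=.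
    apply: leq_trans rH _; apply: rank_ltmx.
    rewrite ltmxE addsmxSl /=; apply: contra nT => h.
    exact: submx_trans (addsmxSr _ _) h.
  exists (~: I); rewrite S5 setCK; split; last split.
  + by rewrite -addnA addn1 -cI addnC cardsC card_ord.
  + by apply: not1; apply: contra nHT => h; apply: submx_trans h (addsmxSl _ _).
  + exact: L3 hP _ sT.
- case=> J [cJ [nJ sJ]]; rewrite S5 in nJ sJ.
  set H := span_excl Fr (~: J) in nJ sJ.
  have sT : (orth_compl cj U <= H)%MS.
    exact: submx_trans (orth_anti sJ) (orthK _).
  split.
    split => // I cI.
    apply/eqmxP; apply: eqmx_trans (eqmxP (S1 _ _ _)) _.
    apply: eqmx_trans (eqmxMr P (eqmxP (rob _ cI))) _.
    by rewrite mul1mx; apply/eqmxP; apply: PU.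
  move=> s [sk robs]; rewrite leqNgt; apply/negP => rs.
  have cC : #|~: J| = r.+1.
    apply: (@addnI #|J|); rewrite cardsC card_ord; symmetry.
    by rewrite addnS -[(#|J| + r).+1]addn1 cJ.
  have := @set_extend _ (s - r.+1) (~: J); rewrite cC subnKC // card_ord.
  case/(_ sk) => B [sB cB].
  have hU : (U <= H *m P)%MS.
    have /andP [_ h] := robs B cB.
    apply: submx_trans h _; apply: submx_trans (proj1 (andP (S1 Fr P B))) _.
    by apply: submxMr; apply: S2.
  by move: nJ; rewrite /eqmx submx1 (L1 hP hU sT).
Qed.

End Gen.

Lemma pos_real (R : realFieldType) n (x : 'rV[R]_n) :
  x *m (map_mx (@idfun R) x)^T = 0 -> x = 0.
Proof.
move=> h; apply/rowP => j; have := congr1 (fun M : 'M_1 => M 0 0) h.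
rewrite !mxE (eq_bigr (fun j => x 0 j ^+ 2)); last by move=> i _; rewrite !mxE expr2.
move=> hs; have := psumr_eq0P (fun i _ => sqr_ge0 (x 0 i)) hs (isT : true).
by move/(_ j)/eqP; rewrite sqrf_eq0 ?mxE => /eqP.
Qed.

Lemma pos_cplx (C : numClosedFieldType) n (x : 'rV[C]_n) :
  x *m (map_mx (@Num.conj C) x)^T = 0 -> x = 0.
Proof.
move=> h; apply/rowP => j; have := congr1 (fun M : 'M_1 => M 0 0) h.
rewrite !mxE (eq_bigr (fun j => x 0 j * (x 0 j)^*)); last by move=> i _; rewrite !mxE.
move=> hs; have := psumr_eq0P (fun i _ => mul_conjC_ge0 (x 0 i)) hs (isT : true).
by move/(_ j)/eqP; rewrite mul_conjC_eq0 ?mxE => /eqP.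
Qed.

Theorem theorem2p4 :
  (* real case *)
  (forall (R : realFieldType) (n k : nat) (Fr : 'M[R]_(k, n))
          (U P : 'M[R]_n) (r : nat),
      (0 < n)%N ->
      is_frame Fr 1%:M ->
      max_rob Fr 1%:M r ->
      orth_proj idfun P U ->
      (max_rob (Fr *m P) U r <->
       exists J : {set 'I_k},
         (#|J| + r + 1)%N = k /\
         ~~ (span_in Fr J == 1%:M)%MS /\
         (orth_compl idfun (span_in Fr J) <= U)%MS))
  /\
  (* complex case *)
  (forall (C : numClosedFieldType) (n k : nat) (Fr : 'M[C]_(k, n))
          (U P : 'M[C]_n) (r : nat),
      (0 < n)%N ->
      is_frame Fr 1%:M ->
      max_rob Fr 1%:M r ->
      orth_proj Num.conj P U ->
      (max_rob (Fr *m P) U r <->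
       exists J : {set 'I_k},
         (#|J| + r + 1)%N = k /\
         ~~ (span_in Fr J == 1%:M)%MS /\
         (orth_compl Num.conj (span_in Fr J) <= U)%MS)).
Proof.
split.
- move=> R n k Fr U P r n0 _ mr hP.
  exact: (@main R (GRing.RMorphism.clone _ _ (@idfun R) _) (fun _ => erefl) (@pos_real R) n k Fr U P r n0 mr hP).
- move=> C n k Fr U P r n0 _ mr hP.
  exact: (@main C (GRing.RMorphism.clone _ _ (@Num.conj C) _) (@conjCK C) (@pos_cplx C) n k Fr U P r n0 mr hP).
Qed.
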